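(* Consider factor graphs of LDPC codes with $N$ variable nodes and $M$ check nodes, all check nodes of degree $d_c$, variable node degree distribution (edge perspective) $\{\lambda_i\}$, and design rate $R=1-\frac{1/d_c}{\sum_j\lambda_j/j}=1-\frac{M}{N}$. A factor graph with this degree distribution having no cycles of variable nodes of degree two and three (i.e., in which the subgraph consisting of all variable nodes of degree two or three, all check nodes, and the edges between them contains no cycle) exists if and only if $$3\lambda_2+4\lambda_3\le\frac{6}{d_c}\,\frac{(1-R)-\frac1N}{1-R}.$$ Moreover, the right-hand side is strictly less than $\frac{6}{d_c}$.
   Context: $\lambda_i$ denotes the fraction of edges of the factor graph connected to variable nodes of degree $i$; the node-perspective fractions are $\Lambda_i=\frac{\lambda_i/i}{\sum_j\lambda_j/j}$, the fraction of variable nodes of degree $i$. The factor graph is the bipartite graph between variable nodes and check nodes of the parity-check matrix. *)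

(* Defs.v *)
From mathcomp Require Import all_boot all_order all_algebra.
Set Implicit Arguments. Unset Strict Implicit. Unset Printing Implicit Defensive.
Import Order.TTheory GRing.Theory Num.Theory.
Local Open Scope ring_scope.

(* A parity-check matrix H : 'M['F_2]_(M, N) (M check nodes = rows,
   N variable nodes = columns).  Its factor graph is the bipartite graph with
   an edge between check c and variable v iff H c v != 0. *)

Definition vdeg (M N : nat) (H : 'M['F_2]_(M, N)) (v : 'I_N) : nat :=
  #|[set c : 'I_M | H c v != 0]|.

Definition cdeg (M N : nat) (H : 'M['F_2]_(M, N)) (c : 'I_M) : nat :=
  #|[set v : 'I_N | H c v != 0]|.

Definition nedges (M N : nat) (H : 'M['F_2]_(M, N)) : nat :=
  #|[set p : 'I_M * 'I_N | H p.1 p.2 != 0]|.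

Definition nvars_deg (M N : nat) (H : 'M['F_2]_(M, N)) (i : nat) : nat :=
  #|[set v : 'I_N | vdeg H v == i]|.

Definition edge_frac (R : realFieldType) (M N : nat) (H : 'M['F_2]_(M, N))
  (i : nat) : R :=
  (i * nvars_deg H i)%:R / (nedges H)%:R.

Definition has_degree_distribution (R : realFieldType) (M N : nat)
  (H : 'M['F_2]_(M, N)) (dc : nat) (lam : nat -> R) : Prop :=
  (forall c : 'I_M, cdeg H c = dc) /\ (forall i : nat, lam i = edge_frac R H i).

Definition fg_vertex (M N : nat) := ('I_N + 'I_M)%type.

Definition adj23 (M N : nat) (H : 'M['F_2]_(M, N)) : rel (fg_vertex M N) :=
  fun x y =>
    match x, y with
    | inl v, inr c => ((vdeg H v == 2%N) || (vdeg H v == 3%N)) && (H c v != 0)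
    | inr c, inl v => ((vdeg H v == 2%N) || (vdeg H v == 3%N)) && (H c v != 0)
    | _, _ => false
    end.

Definition has_cycle (T : eqType) (e : rel T) : Prop :=
  exists p : seq T, [/\ uniq p, (2 < size p)%N & cycle e p].

Definition no_cycle23 (M N : nat) (H : 'M['F_2]_(M, N)) : Prop :=
  ~ has_cycle (adj23 H).

Definition rate_MN (R : realFieldType) (M N : nat) : R := 1 - M%:R / N%:R.

(* Main.v *)
Require Import Defs.
From mathcomp Require Import all_boot all_order all_algebra.
From mathcomp Require Import zify ring lra.
Import Order.TTheory GRing.Theory Num.Theory.
Set Implicit Arguments. Unset Strict Implicit. Unset Printing Implicit Defensive.

Section Forest.
Variables (T : finType) (e : rel T).
Hypothesis esym : symmetric e.
Hypothesis eirr : irreflexive e.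
Hypothesis noc : ~ has_cycle e.

Definition degS (S : {set T}) x := #|[set y in S | e x y]|.

Lemma cyc_from y r0 q' z : uniq (y :: r0 :: q') -> path e y (r0 :: q') ->
  z \in q' -> e z y -> False.
Proof.
move=> Hu Hp Hz Hzy; case/splitPr: Hz Hu Hp => s1 s2 Hu Hp.
apply: noc; exists (y :: r0 :: rcons s1 z); split.
- apply: subseq_uniq Hu; rewrite -cats1 /= !eqxx.
  by apply: cat_subseq => //=; rewrite eqxx sub0seq.
- by case: s1 {Hu Hp}.
  rewrite /cycle /= rcons_path last_rcons Hzy andbT.
  move: Hp => /= /andP [-> ]; rewrite cat_path => /andP [H1 /= /andP [H2 _]].
  by rewrite rcons_path H1 H2.
Qed.

Lemma leaf_stuck (S : {set T}) y q : uniq (y :: q) ->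
  path e y q -> (forall w, w \in S -> e y w -> w \in y :: q) -> degS S y <= 1.
Proof.
move=> Hu Hp Hno.
rewrite leqNgt; apply/negP => /card_gt1P [z1 [z2 [z1S z2S z12]]].
move: z1S z2S; rewrite !inE => /andP [z1S e1] /andP [z2S e2].
have inq : forall w, w \in S -> e y w -> w \in q.
  move=> w wS eyw; have := Hno w wS eyw; rewrite inE.
  by case/orP => // /eqP Ew; move: eyw; rewrite Ew eirr.
case: q Hu Hp Hno inq => [|r0 q'] Hu Hp Hno inq; first by have := inq _ z1S e1.
case: (eqVneq z1 r0) => [E1|N1].
+ have : z2 \in q'.
    by move: (inq _ z2S e2); rewrite inE -E1 eq_sym (negbTE z12).
  by move=> H; apply: (cyc_from Hu Hp H); rewrite esym.
+ have : z1 \in q' by move: (inq _ z1S e1); rewrite inE (negbTE N1).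
  by move=> H; apply: (cyc_from Hu Hp H); rewrite esym.
Qed.

Lemma stuck_case (S : {set T}) y q : uniq (y :: q) -> all (mem S) (y :: q) ->
  path e y q -> ~~ [exists z, (z \in S) && e y z && (z \notin y :: q)] ->
  exists2 x, x \in S & degS S x <= 1.
Proof.
move=> Hu Ha Hp Hno; exists y; first by move/allP: Ha; apply; rewrite inE eqxx.
apply: (leaf_stuck Hu Hp) => w wS eyw.
by case: (boolP (w \in y::q)) => // Hw; move/existsPn: Hno => /(_ w); rewrite wS eyw Hw.
Qed.

Lemma leaf_aux (S : {set T}) k : forall y q, uniq (y :: q) -> all (mem S) (y :: q) ->
  path e y q -> #|S| - size (y :: q) <= k -> exists2 x, x \in S & degS S x <= 1.
Proof.
elim: k => [|k IH] y q Hu Ha Hp Hk;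
 (case: (boolP [exists z, (z \in S) && e y z && (z \notin y :: q)]) => [/existsP [z /andP [/andP [zS eyz] znq]]|Hno]);
 try (by apply: stuck_case Hno).
- have : size (z :: y :: q) <= #|S|.
    rewrite -(card_uniqP _) ?subset_leq_card //=; last by rewrite znq.
    by apply/subsetP => w; rewrite inE => /orP [/eqP -> //|]; move/allP: Ha => H /H.
  move=> /= H; exfalso; move: Hk; rewrite /= in H *; lia.
- apply: (IH z (y :: q)) => //=.
  + by rewrite znq.
  + by rewrite zS.
  + by rewrite esym eyz Hp.
  + have : size (z :: y :: q) <= #|S|.
      rewrite -(card_uniqP _) ?subset_leq_card //=; last by rewrite znq.
      by apply/subsetP => w; rewrite inE => /orP [/eqP -> //|]; move/allP: Ha => H /H.
    by move=> /= H; move: Hk; rewrite /= in H *; lia.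
Qed.

Lemma leaf (S : {set T}) : S != set0 -> exists2 x, x \in S & degS S x <= 1.
Proof.
case/set0Pn => x xS; apply: (@leaf_aux S #|S| x [::]) => //=.
- by rewrite xS.
- lia.
Qed.

Lemma degS_D1 (S : {set T}) x y : x \in S ->
  degS S y = e y x + degS (S :\ x) y.
Proof.
move=> xS; rewrite /degS (cardsD1 x) inE xS /=; congr (_ + _).
by apply: eq_card => z; rewrite !inE andbA.
Qed.

Lemma sum_e (S : {set T}) x : x \in S ->
  \sum_(y in S :\ x) (e y x : nat) = degS S x.
Proof.
move=> xS; rewrite /degS -sum1_card [RHS]big_mkcond big_mkcond /=.
rewrite big_mkcond; apply: eq_bigr => y _; rewrite !inE esym.
by case: (eqVneq y x) => [->|]; rewrite ?eirr ?andbF //=; case: (y \in S); case: (e x y).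
Qed.

Lemma edges n : forall (S : {set T}), #|S| = n.+1 ->
  \sum_(x in S) degS S x + 2 <= 2 * #|S|.
Proof.
elim: n => [|n IH] S HS.
- have [x Sx] : exists x, S = [set x] by apply/cards1P; rewrite HS.
  rewrite Sx big_set1 cards1 /degS.
  suff -> : [set y in [set x] | e x y] = set0 by rewrite cards0.
  by apply/setP => y; rewrite !inE; case: (eqVneq y x) => [->|]; rewrite ?eirr ?andbF.
- have S0 : S != set0 by apply/eqP => E; rewrite E cards0 in HS.
  case: (leaf S0) => x xS dx.
  rewrite (bigD1 x) //=.
  have -> : \sum_(i in S | i != x) degS S i = \sum_(i in S :\ x) degS S i.
    by apply: eq_bigl => i; rewrite !inE andbC.
  rewrite (eq_bigr (fun y => e y x + degS (S :\ x) y)); last by move=> y _; apply: degS_D1.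
  rewrite big_split /= sum_e //.
  have HS' : #|S :\ x| = n.+1 by move: HS; rewrite (cardsD1 x) xS; case.
  have := IH _ HS'; move: HS; rewrite (cardsD1 x) xS; lia.
Qed.

End Forest.

Lemma card_sumT (I J : finType) (A : {set I + J}) :
  #|A| = #|[set i | inl i \in A]| + #|[set j | inr j \in A]|.
Proof.
rewrite -!sum1_card !(big_mkcond (fun x => x \in _)) big_sumType /=.
by congr (_ + _); apply: eq_bigr => i _; rewrite inE.
Qed.

Lemma card_as_sum (I : finType) (P : pred I) : #|[set i | P i]| = \sum_i (P i : nat).
Proof. by rewrite -sum1_card big_mkcond; apply: eq_bigr => i _; rewrite inE; case: (P i). Qed.

Section Fwd.
Variables (M N : nat) (H : 'M['F_2]_(M, N)).
Definition is23 v := (vdeg H v == 2%N) || (vdeg H v == 3%N).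
Definition S23 : {set fg_vertex M N} :=
  [set x | match x with inl v => is23 v | inr _ => true end].

Lemma adj_sym : symmetric (adj23 H).
Proof. by case=> [v|c] [w|d]. Qed.
Lemma adj_irr : irreflexive (adj23 H).
Proof. by case. Qed.

Lemma deg_inl v : is23 v -> degS (adj23 H) S23 (inl v) = vdeg H v.
Proof.
move=> h; rewrite /degS card_sumT.
have -> : [set i | inl i \in [set y in S23 | adj23 H (inl v) y]] = set0.
  by apply/setP => i; rewrite !inE andbF.
rewrite cards0 /vdeg add0n; apply: eq_card => c; rewrite !inE /=.
by move: h; rewrite /is23 => ->.
Qed.

Lemma deg_inr c : degS (adj23 H) S23 (inr c) = #|[set v | is23 v && (H c v != 0%R)]|.
Proof.
rewrite /degS card_sumT.
have -> : [set i | inr i \in [set y in S23 | adj23 H (inr c) y]] = set0.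
  by apply/setP => i; rewrite !inE andbF.
by rewrite cards0 addn0; apply: eq_card => v; rewrite !inE /= /is23; case: (_ || _); rewrite ?andbT ?andbF.
Qed.

Lemma sum_deg : \sum_(x in S23) degS (adj23 H) S23 x = 2 * \sum_(v | is23 v) vdeg H v.
Proof.
rewrite (big_mkcond (fun x => x \in S23)) big_sumType /=.
rewrite mul2n -addnn; congr (_ + _).
  by rewrite [RHS]big_mkcond; apply: eq_bigr => v _; rewrite inE; case: ifP => // h; rewrite deg_inl.
rewrite (eq_bigr (fun c => \sum_v ((is23 v && (H c v != 0%R)) : nat))); last first.
  by move=> c _; rewrite inE deg_inr card_as_sum.
rewrite exchange_big [RHS]big_mkcond; apply: eq_bigr => v _.
case: ifP => h; last by rewrite big1 // => c _; rewrite h.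
by rewrite /vdeg card_as_sum; apply: eq_bigr => c _.
Qed.

Lemma card_S23 : #|S23| = #|[set v | is23 v]| + M.
Proof.
rewrite card_sumT; congr (_ + _); first by apply: eq_card => v; rewrite !inE.
by rewrite -[RHS](card_ord M); apply: eq_card => c; rewrite !inE.
Qed.

Lemma sum23 : \sum_(v | is23 v) vdeg H v = 2 * nvars_deg H 2 + 3 * nvars_deg H 3.
Proof.
rewrite /nvars_deg !card_as_sum !big_distrr /= -big_split big_mkcond /=.
by apply: eq_bigr => v _; rewrite /is23; case: (vdeg H v) => [|[|[|[|k]]]].
Qed.

Lemma card23 : #|[set v | is23 v]| = nvars_deg H 2 + nvars_deg H 3.
Proof.
rewrite /nvars_deg !card_as_sum -big_split /=.
by apply: eq_bigr => v _; rewrite /is23; case: (vdeg H v) => [|[|[|[|k]]]].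
Qed.

Lemma forward : (0 < M)%N -> no_cycle23 H ->
  (nvars_deg H 2 + 2 * nvars_deg H 3 <= M - 1)%N.
Proof.
move=> M0 noc.
have S0 : #|S23| = (#|S23|.-1).+1 by rewrite card_S23; lia.
have := edges adj_sym adj_irr noc S0.
rewrite sum_deg sum23 card_S23 card23; lia.
Qed.
End Fwd.

Lemma nedges_c M N (H : 'M['F_2]_(M, N)) : nedges H = \sum_c cdeg H c.
Proof.
rewrite /nedges card_as_sum -(pair_bigA _ (fun c v => (H c v != 0%R) : nat)) /=.
by apply: eq_bigr => c _; rewrite /cdeg card_as_sum.
Qed.

Lemma nedges_v M N (H : 'M['F_2]_(M, N)) : nedges H = \sum_v vdeg H v.
Proof.
rewrite /nedges card_as_sum -(pair_bigA _ (fun c v => (H c v != 0%R) : nat)) /= exchange_big.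
by apply: eq_bigr => c _; rewrite /vdeg card_as_sum.
Qed.

Lemma nedges_dc M N dc (H : 'M['F_2]_(M, N)) : (forall c, cdeg H c = dc) -> nedges H = (M * dc)%N.
Proof.
by move=> h; rewrite nedges_c (eq_bigr (fun _ => dc)) ?sum_nat_const ?card_ord // => c _.
Qed.

Section Alg.
Local Open Scope ring_scope.

Lemma rhs_eq (R : realFieldType) (M N dc : nat) : (0 < N)%N -> (0 < M)%N -> (0 < dc)%N ->
  6 / dc%:R * (((1 - rate_MN R M N) - 1 / N%:R) / (1 - rate_MN R M N))
  = (6 * (M - 1))%:R / (M * dc)%:R.
Proof.
move=> N0 M0 d0; rewrite /rate_MN.
have hN : (N%:R : R) != 0 by rewrite pnatr_eq0 -lt0n.
have hM : (M%:R : R) != 0 by rewrite pnatr_eq0 -lt0n.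
have hd : (dc%:R : R) != 0 by rewrite pnatr_eq0 -lt0n.
rewrite natrM natrB // natrM; field.
by rewrite hN hM hd.
Qed.

Lemma key_iff (R : realFieldType) (M N dc x y : nat) : (0 < N)%N -> (0 < M)%N -> (0 < dc)%N ->
  (3 * ((2 * x)%N%:R / (M * dc)%N%:R) + 4 * ((3 * y)%N%:R / (M * dc)%N%:R)
   <= 6 / dc%:R * (((1 - rate_MN R M N) - 1 / N%:R) / (1 - rate_MN R M N)))
  <-> (x + 2 * y <= M - 1)%N.
Proof.
move=> N0 M0 d0; rewrite rhs_eq //.
have hMd : (0 : R) < (M * dc)%N%:R by rewrite ltr0n muln_gt0 M0.
have -> : 3 * ((2 * x)%N%:R / (M * dc)%N%:R) + 4 * ((3 * y)%N%:R / (M * dc)%N%:R)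
  = (6 * (x + 2 * y))%N%:R / (M * dc)%N%:R :> R.
  rewrite !natrM natrD natrM; field.
  by rewrite !pnatr_eq0 -!lt0n d0 M0.
rewrite ler_pdivrMr // divfK ?lt0r_neq0 // ler_nat; split => h; lia.
Qed.

Lemma strict_part (R : realFieldType) (M N dc : nat) : (0 < N)%N -> (0 < M)%N -> (0 < dc)%N ->
  6 / dc%:R * (((1 - rate_MN R M N) - 1 / N%:R) / (1 - rate_MN R M N)) < 6 / dc%:R.
Proof.
move=> N0 M0 d0; rewrite rhs_eq //.
have hMd : (0 : R) < (M * dc)%N%:R by rewrite ltr0n muln_gt0 M0.
have -> : 6 / dc%:R = (6 * M)%N%:R / (M * dc)%N%:R :> R.
  rewrite !natrM; field.
  by rewrite !pnatr_eq0 -!lt0n d0 M0.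
rewrite ltr_pdivrMr // divfK ?lt0r_neq0 // ltr_nat; lia.
Qed.

End Alg.

Lemma head_rev_cons (T : Type) (x y : T) s : head x (rev (y :: s)) = last y s.
Proof. case/lastP: s => [|s z]; first by []. rewrite -rcons_cons rev_rcons last_rcons. by []. Qed.

Section Crit.
Variables (M N : nat) (H : 'M['F_2]_(M, N)) (kap : 'I_N -> nat) (sp : 'I_N -> nat).
Hypothesis hyp : forall v w c, is23 H v -> is23 H w -> H c v != 0%R -> H c w != 0%R ->
  v != w -> val c != sp v -> kap v < kap w.

Local Notation e := (adj23 H).

Lemma core v q : uniq (inl v :: q) -> cycle e (inl v :: q) -> 1 < size q ->
  (forall w, inl w \in q -> kap w <= kap v) ->
  exists2 c, head (inl v) q = inr c & val c = sp v.
Proof.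
case: q => [|a [|b r]] //= Hu Hc _ Hmax.
move: Hc; rewrite /cycle /= => /and3P [eva eab _].
case: a eva eab Hu Hmax => [x|c] //= /andP [h23v Hcv].
case: b => [w|d] //= /andP [h23w Hcw] Hu Hmax.
exists c => //; apply/eqP; apply: contraTT isT => Hsp.
have vw : v != w.
  by apply/eqP => E; move: Hu; rewrite E !inE /= eqxx.
have := hyp h23v h23w Hcv Hcw vw Hsp.
have := Hmax w; rewrite !inE eqxx orbT => /(_ isT); lia.
Qed.

Lemma crit : no_cycle23 H.
Proof.
move=> [p [Up Sp Cp]].
have [v0 Hv0] : exists v, inl v \in p.
  case: p Up Sp Cp => [|[v|c] [|y r]] //= Up Sp Cp.
  - by exists v; rewrite inE eqxx.
  - move: Cp; rewrite /cycle /= => /andP [].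
    by case: y Up Sp => [w|d] // _ _ _ _; exists w; rewrite !inE eqxx orbT.
pose P n := [exists v, (inl v \in p) && (kap v == n)].
have exP : exists n, P n by exists (kap v0); apply/existsP; exists v0; rewrite Hv0 eqxx.
have ubP : forall n, P n -> n <= \sum_v kap v.
  move=> n /existsP [v /andP [_ /eqP <-]].
  by rewrite (bigD1 v) //= leq_addr.
case: (ex_maxnP exP ubP) => n /existsP [v /andP [vp /eqP kv]] maxn.
have Hmax : forall w, inl w \in p -> kap w <= kap v.
  by move=> w wp; rewrite kv; apply: maxn; apply/existsP; exists w; rewrite wp eqxx.
case: (rot_to vp) => i q Hrot.
have Uq : uniq (inl v :: q) by rewrite -Hrot rot_uniq.
have Cq : cycle e (inl v :: q) by rewrite -Hrot rot_cycle.
have Sq : 1 < size q by move: Sp; rewrite -(size_rot i) Hrot /=.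
have Mq : forall w, inl w \in q -> kap w <= kap v.
  by move=> w wq; apply: Hmax; rewrite -(mem_rot i) Hrot inE wq orbT.
have [c1 Hc1 Ec1] := core Uq Cq Sq Mq.
have Uq' : uniq (inl v :: rev q) by move: Uq; rewrite /= mem_rev rev_uniq.
have Cq' : cycle e (inl v :: rev q).
  rewrite -(rot_cycle 1) rot1_cons -rev_cons rev_cycle.
  by rewrite -(eq_cycle (e := e)) // => x y; rewrite adj_sym.
have Sq' : 1 < size (rev q) by rewrite size_rev.
have Mq' : forall w, inl w \in rev q -> kap w <= kap v.
  by move=> w; rewrite mem_rev; apply: Mq.
have [c2 Hc2 Ec2] := core Uq' Cq' Sq' Mq'.
have c12 : c1 = c2 by apply: val_inj; rewrite Ec1 Ec2.
clear Hrot Cq Mq Uq' Cq' Sq' Mq' Hmax maxn vp kv.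
case: q Uq Sq Hc1 Hc2 => [|a [|b r]] //= Uq _ Ha Hl.
have : last b r \in b :: r by apply: mem_last.
rewrite head_rev_cons /= -c12 -Ha in Hl; rewrite Hl => H1.
by move: Uq => /and4P [_ H2 _ _]; rewrite H1 in H2.
Qed.
End Crit.

Lemma recr_cond (Q : pred nat) (F : nat -> nat) n :
  \sum_(0 <= v < n.+1 | Q v) F v = \sum_(0 <= v < n | Q v) F v + (if Q n then F n else 0).
Proof. by rewrite big_mkcond big_nat_recr //= -big_mkcond. Qed.

Lemma tiling (T : eqType) (f : nat -> T) (Q : pred nat) (len : nat -> nat) base n x :
  \sum_(0 <= v < n | Q v) count_mem x (map f (iota (base + \sum_(0 <= u < v | Q u) len u) (len v)))
  = count_mem x (map f (iota base (\sum_(0 <= v < n | Q v) len v))).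
Proof.
elim: n => [|n IH]; first by rewrite !big_geq.
rewrite !recr_cond IH.
by case: (Q n); rewrite ?addn0 // iotaD map_cat count_cat.
Qed.

Lemma rank_reindex (Q : pred nat) (F : nat -> nat) n :
  \sum_(0 <= v < n | Q v) F (\sum_(0 <= u < v | Q u) 1)
  = \sum_(0 <= k < \sum_(0 <= u < n | Q u) 1) F k.
Proof.
elim: n => [|n IH]; first by rewrite !big_geq.
rewrite !recr_cond IH; case: (Q n); rewrite ?addn0 //.
by rewrite addn1 big_nat_recr.
Qed.
Lemma prefix_split (Q : pred nat) (len : nat -> nat) v w : v <= w ->
  \sum_(0 <= u < w | Q u) len u
  = \sum_(0 <= u < v | Q u) len u + \sum_(v <= u < w | Q u) len u.
Proof. by move=> vw; rewrite (@big_cat_nat _ _ _ v 0 w Q len (leq0n v) vw). Qed.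

Lemma prefix_mono (Q : pred nat) (len : nat -> nat) v w : v < w ->
  \sum_(0 <= u < v | Q u) len u + (if Q v then len v else 0) <= \sum_(0 <= u < w | Q u) len u.
Proof.
move=> vw; rewrite (prefix_split Q len (ltnW vw)) leq_add2l.
rewrite big_mkcond (big_ltn vw); apply: leq_addr.
Qed.

Lemma prefix_le (Q : pred nat) (len : nat -> nat) v w : v <= w ->
  \sum_(0 <= u < v | Q u) len u <= \sum_(0 <= u < w | Q u) len u.
Proof. by move=> vw; rewrite (prefix_split Q len vw) leq_addr. Qed.

Section Cons.
Variables (M N dc : nat) (dg : nat -> nat).
Hypothesis M0 : 0 < M.

Definition P23 v := (dg v == 2) || (dg v == 3).
Definition rk v := \sum_(0 <= u < v | P23 u) 1.
Definition L23 := \sum_(0 <= u < N | P23 u) dg u.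
Definition m23 := rk N.
Definition s23 := L23 - M.
Definition a23 k := (((0 < k) && (k <= s23)) : nat) + (k < s23).
Definition sh k := (if (0 < k) && (k <= s23) then [:: k.-1] else [::]) ++ (if k < s23 then [:: k] else [::]).
Definition len23 v := dg v - a23 (rk v).
Definition us v := s23 + \sum_(0 <= u < v | P23 u) len23 u.
Definition ps v := L23 + \sum_(0 <= u < v | ~~ P23 u) dg u.
Definition W v := if P23 v then sh (rk v) ++ iota (us v) (len23 v)
                  else [seq p %% M | p <- iota (ps v) (dg v)].

Lemma a23_le2 k : a23 k <= 2.
Proof. by rewrite /a23; case: (_ && _); case: (k < s23). Qed.

Lemma size_sh k : size (sh k) = a23 k.
Proof. by rewrite /sh /a23; case: (_ && _); case: (k < s23). Qed.

Lemma P23_ge2 v : P23 v -> 2 <= dg v.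
Proof. by rewrite /P23 => /orP [] /eqP ->. Qed.

Lemma L23_ge : 2 * m23 <= L23.
Proof.
rewrite /m23 /rk /L23 big_distrr /=; apply: leq_sum => v Pv.
by rewrite muln1; apply: P23_ge2.
Qed.

Lemma sum_a_gen n : \sum_(0 <= k < n) a23 k = minn n s23 + minn n.-1 s23.
Proof.
elim: n => [|n IH]; first by rewrite big_geq //; lia.
rewrite big_nat_recr /= ?IH /a23; last by [].
case: n {IH} => [|n] /=.
  by case: (ltnP 0 s23) => h /=; lia.
by case: (ltnP n s23) => h1; case: (ltnP n.+1 s23) => h2 /=; lia.
Qed.

Lemma sum_a : \sum_(0 <= k < m23) a23 k = minn m23 s23 + minn m23.-1 s23.
Proof. exact: sum_a_gen. Qed.

Lemma sum_len_a : \sum_(0 <= v < N | P23 v) len23 v + \sum_(0 <= v < N | P23 v) a23 (rk v) = L23.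
Proof.
rewrite -big_split /= /L23; apply: eq_bigr => v Pv.
have := P23_ge2 Pv; have := a23_le2 (rk v); rewrite /len23; lia.
Qed.

Lemma sum_len : \sum_(0 <= v < N | P23 v) len23 v = L23 - (minn m23 s23 + minn m23.-1 s23).
Proof.
have := sum_len_a; rewrite /rk rank_reindex -/(rk N) -/m23 sum_a; lia.
Qed.

Lemma count_iota c a n : count_mem c (iota a n) = ((a <= c) && (c < a + n)).
Proof. by rewrite count_uniq_mem ?iota_uniq // mem_iota. Qed.

Lemma map_mod_block q j : j <= M -> [seq p %% M | p <- iota (q * M) j] = iota 0 j.
Proof.
move=> jM; rewrite -[q * M]addn0 iotaDl -map_comp -[RHS]map_id.
apply/eq_in_map => i; rewrite mem_iota /= => ij.
by rewrite modnMDl modn_small //; lia.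
Qed.

Lemma mmb0 j : j <= M -> [seq p %% M | p <- iota 0 j] = iota 0 j.
Proof. by move=> jM; have := map_mod_block 0 jM; rewrite mul0n. Qed.

Lemma mmb1 j : j <= M -> [seq p %% M | p <- iota M j] = iota 0 j.
Proof. by move=> jM; have := map_mod_block 1 jM; rewrite mul1n. Qed.

Lemma count_mod_full c q : c < M -> count_mem c [seq p %% M | p <- iota 0 (M * q)] = q.
Proof.
move=> cM; elim: q => [|q IH]; first by rewrite muln0.
rewrite mulnS addnC iotaD map_cat count_cat IH add0n mulnC map_mod_block //.
by rewrite count_iota cM; lia.
Qed.

Lemma count_mod_L c L : c < M -> L <= 2 * M ->
  count_mem c [seq p %% M | p <- iota 0 L] = (c < L) + ((M <= L) && (c < L - M)).
Proof.
move=> cM L2; case: (leqP L M) => LM.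
  rewrite mmb0 // count_iota /=; case: (ltnP c L) => h1; case: (leqP M L) => h2 /=; lia.
have E : iota 0 L = iota 0 M ++ iota M (L - M) by rewrite -iotaD subnKC // ltnW.
rewrite E map_cat count_cat mmb0 // mmb1; last by lia.
rewrite !count_iota /=; case: (ltnP c L) => h1; case: (leqP M L) => h2;
  case: (ltnP c (L - M)) => h3 /=; lia.
Qed.

Lemma count_if1 (c : nat) b (x : nat) : count_mem c (if b then [:: x] else [::]) = b && (x == c).
Proof. by case: b => /=; rewrite ?addn0. Qed.

Lemma count_sh c k : count_mem c (sh k) = ((c < s23) && (k == c)) + ((c < s23) && (k == c.+1)).
Proof.
rewrite /sh count_cat; case: k => [|k] /=; rewrite !count_if1.
  by case: c => [|c] /=; rewrite ?andbF ?andbT ?addn0.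
case: (eqVneq c k) => [->|kc] /=.
  by rewrite eqxx (gtn_eqF (ltnSn k)) !andbT !andbF addn0.
case: (eqVneq c k.+1) => [->|kc1] /=; rewrite ?eqxx ?andbT ?andbF ?addn0 //.
  by rewrite (ltn_eqF (ltnSn k.+1)) andbF addn0.
by rewrite eqSS eq_sym (negbTE kc) andbF.
Qed.

Lemma sum_eqc c n : \sum_(0 <= k < n) ((k == c) : nat) = (c < n).
Proof.
elim: n => [|n IH]; first by rewrite big_geq.
rewrite big_nat_recr //= IH; case: (ltngtP c n) => h.
- by rewrite ltnS ltnW.
- by rewrite ltnS leqNgt h.
- by rewrite h ltnSn.
Qed.

Lemma sum_sh c n : \sum_(0 <= k < n) count_mem c (sh k) =
  ((c < s23) && (c < n)) + ((c < s23) && (c.+1 < n)).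
Proof.
rewrite (eq_bigr (fun k => ((c < s23) && (k == c)) + ((c < s23) && (k == c.+1)))); last by move=> k _; rewrite count_sh.
rewrite big_split /=; case: (c < s23) => /=; last by rewrite !big1.
by rewrite !sum_eqc.
Qed.

Hypothesis dgM : forall v, v < N -> dg v <= M.
Hypothesis dgsum : \sum_(0 <= v < N) dg v = M * dc.
Hypothesis Kb : L23 - m23 <= M - 1.

Lemma L23_le : L23 <= 2 * M.
Proof. have := L23_ge; lia. Qed.

Lemma s_small : s23 = 0 \/ (0 < s23 /\ s23 < m23).
Proof. have := L23_ge; rewrite /s23; lia. Qed.

Lemma slen : \sum_(0 <= v < N | P23 v) len23 v = L23 - 2 * s23.
Proof.
rewrite sum_len; case: s_small => h.
  by rewrite h !minn0; lia.
have h1 : minn m23 s23 = s23 by lia.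
have h2 : minn m23.-1 s23 = s23 by lia.
rewrite h1 h2; lia.
Qed.

Lemma s_le : s23 <= M.
Proof. have := L23_le; rewrite /s23; lia. Qed.

Lemma us_bound v : v < N -> P23 v -> us v + len23 v <= M.
Proof.
move=> vN Pv; have := prefix_mono P23 len23 vN; rewrite Pv slen /us.
have := L23_le; have := s_small; rewrite /s23; lia.
Qed.

Lemma sh_lt k c : c \in sh k -> c < s23.
Proof.
rewrite /sh mem_cat; case: ifP => [/andP [k0 ks]|_]; case: ifP => h; rewrite ?inE /=;
  try (case/orP); try (move/eqP ->); rewrite ?in_nil //; lia.
Qed.

Lemma W_lt v c : v < N -> c \in W v -> c < M.
Proof.
move=> vN; rewrite /W; case: ifP => Pv.
  rewrite mem_cat => /orP [/sh_lt|]; first by have := s_le; lia.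
  by rewrite mem_iota => /andP [_]; have := us_bound vN Pv; lia.
by case/mapP => p _ ->; rewrite ltn_pmod.
Qed.

Lemma W_uniq v : v < N -> uniq (W v).
Proof.
move=> vN; rewrite /W; case: ifP => Pv.
  rewrite cat_uniq iota_uniq andbT; apply/andP; split.
    rewrite /sh; case: ifP => [/andP [k0 ks]|_]; case: ifP => h //=; rewrite andbT inE.
    by rewrite neq_ltn prednK // leqnn.
  apply/hasPn => c; rewrite mem_iota => /andP [h _]; apply/negP => /sh_lt.
  by move: h; rewrite /us; lia.
rewrite -[ps v]addn0 iotaDl -map_comp map_inj_in_uniq ?iota_uniq //.
move=> i j; rewrite !mem_iota /= !add0n => ih jh /eqP.
rewrite eqn_modDl => /eqP; rewrite !modn_small; first by [].
- by have := dgM vN; lia.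
- by have := dgM vN; lia.
Qed.

Lemma W_size v : size (W v) = dg v.
Proof.
rewrite /W; case: ifP => Pv; last by rewrite size_map size_iota.
rewrite size_cat size_sh size_iota /len23; have := a23_le2 (rk v); have := P23_ge2 Pv; lia.
Qed.

Lemma count23 c : c < M ->
  \sum_(0 <= v < N | P23 v) count_mem c (W v) = count_mem c [seq p %% M | p <- iota 0 L23].
Proof.
move=> cM.
rewrite (eq_bigr (fun v => count_mem c (sh (rk v)) + count_mem c (iota (us v) (len23 v))));
  last by move=> v Pv; rewrite /W Pv count_cat.
rewrite big_split /=.
have -> : \sum_(0 <= v < N | P23 v) count_mem c (sh (rk v)) = \sum_(0 <= k < m23) count_mem c (sh k).
  by rewrite /rk (rank_reindex P23 (fun k => count_mem c (sh k)) N).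
have -> : \sum_(0 <= v < N | P23 v) count_mem c (iota (us v) (len23 v)) = count_mem c (iota s23 (L23 - 2 * s23)).
  by have := tiling id P23 len23 s23 N c; rewrite slen map_id => <-; apply: eq_bigr => v _; rewrite map_id.
rewrite sum_sh count_iota count_mod_L //; last exact: L23_le.
have Lm := L23_ge; have L2 := L23_le.
case: s_small => hs.
  rewrite hs /= add0n subn0; move: hs; rewrite /s23 => hs.
  case: (ltnP c L23) => h1; case: (leqP M L23) => h2 /=; rewrite ?addn0 //; lia.
case: hs => s0 hs.
have LM : M < L23 by move: s0; rewrite /s23; lia.
case: (ltnP c s23) => h1.
  have -> : c < m23 by lia.
  have -> : c.+1 < m23 by lia.
  have -> : c < L23 by lia.
  by have -> : M <= L23 by lia.
have -> : c < L23 by lia.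
have -> : M <= L23 by lia.
have -> : c < s23 + (L23 - 2 * s23) by move: h1; rewrite /s23; lia.
by [].
Qed.

Lemma W_count c : c < M -> \sum_(0 <= v < N) count_mem c (W v) = dc.
Proof.
move=> cM; rewrite (bigID P23) /= count23 //.
rewrite (eq_bigr (fun v => count_mem c [seq p %% M | p <- iota (ps v) (dg v)]));
  last by move=> v Pv; rewrite /W (negbTE Pv).
have := tiling (modn^~ M) (fun v => ~~ P23 v) dg L23 N c; rewrite -/(ps _) => ->.
have E : \sum_(0 <= v < N | ~~ P23 v) dg v = M * dc - L23.
  by rewrite -dgsum [in RHS](bigID P23) /= -/L23 addKn.
rewrite E -count_cat -map_cat -iotaD subnKC ?count_mod_full //.
by rewrite -dgsum /L23 [in X in _ <= X](bigID P23) /= leq_addr.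
Qed.

Lemma rk_lt v w : v < w -> P23 v -> rk v < rk w.
Proof. by move=> vw Pv; have := prefix_mono P23 (fun _ => 1) vw; rewrite Pv /rk addn1. Qed.

Lemma rk_inj v w : P23 v -> P23 w -> rk v = rk w -> v = w.
Proof.
move=> Pv Pw E; case: (ltngtP v w) => // h.
- by have := rk_lt h Pv; rewrite E ltnn.
- by have := rk_lt h Pw; rewrite E ltnn.
Qed.

Lemma us_lt v w : v < w -> P23 v -> us v + len23 v <= us w.
Proof. by move=> vw Pv; have := prefix_mono P23 len23 vw; rewrite Pv /us -addnA leq_add2l. Qed.

Lemma us_disj v w c : P23 v -> P23 w -> v != w ->
  c \in iota (us v) (len23 v) -> c \in iota (us w) (len23 w) -> False.
Proof.
move=> Pv Pw vw; rewrite !mem_iota => /andP [h1 h2] /andP [h3 h4].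
case: (ltngtP v w) => h; last by move: vw; rewrite h eqxx.
- by have := us_lt h Pv; lia.
- by have := us_lt h Pw; lia.
Qed.

Lemma mem_sh c k : c \in sh k = ((0 < k) && (k <= s23) && (c == k.-1)) || ((k < s23) && (c == k)).
Proof.
rewrite /sh mem_cat; case: ifP => h1; case: ifP => h2; rewrite ?inE ?in_nil ?andbT ?andbF //= ?orbF.
Qed.

Lemma memW v c : P23 v -> c \in W v = (c \in sh (rk v)) || (c \in iota (us v) (len23 v)).
Proof. by move=> Pv; rewrite /W Pv; apply: mem_cat. Qed.

Lemma acyc_nat v w c : P23 v -> P23 w -> v != w ->
  c \in W v -> c \in W w -> c != (rk v).-1 -> rk v < rk w.
Proof.
move=> Pv Pw vw; rewrite (memW _ Pv) (memW _ Pw) => /orP [hv|hv] /orP [hw|hw] hc.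
- move: hv hw; rewrite !mem_sh (negbTE hc) andbF /= => /andP [hvs /eqP hcv].
  case/orP => [/andP [/andP [w0 _] /eqP hcw]|/andP [_ /eqP hcw]]; first by lia.
  by move: vw; rewrite (rk_inj Pv Pw (etrans (esym hcv) hcw)) eqxx.
- have := sh_lt hv; move: hw; rewrite mem_iota /us; lia.
- have := sh_lt hw; move: hv; rewrite mem_iota /us; lia.
- by case: (us_disj Pv Pw vw hv hw).
Qed.

End Cons.

Lemma card_mem_seq M (s : seq nat) : uniq s -> (forall c, c \in s -> c < M) ->
  #|[set c : 'I_M | val c \in s]| = size s.
Proof.
move=> us hs.
have -> : #|[set c : 'I_M | val c \in s]| = #|pmap insub s : seq 'I_M|.
  by apply: eq_card => c; rewrite inE mem_pmap_sub.
rewrite (card_uniqP _) ?pmap_sub_uniq // size_pmap_sub.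
by apply/eqP; rewrite -all_count; apply/allP => c /hs.
Qed.

Section Build.
Variables (M N dc : nat) (H0 : 'M['F_2]_(M, N)).
Hypothesis M0 : 0 < M.
Hypothesis Hc0 : forall c, cdeg H0 c = dc.
Hypothesis Kb0 : nvars_deg H0 2 + 2 * nvars_deg H0 3 <= M - 1.

Definition dg0 (n : nat) : nat := oapp (vdeg H0) 0 (insub n : option 'I_N).

Lemma dg0E (v : 'I_N) : dg0 v = vdeg H0 v.
Proof. by rewrite /dg0 valK. Qed.

Lemma dgM0 : forall v, v < N -> dg0 v <= M.
Proof.
move=> n _; rewrite /dg0; case: insub => //= v.
by rewrite /vdeg -[X in _ <= X](card_ord M) max_card.
Qed.

Lemma dgsum0 : \sum_(0 <= v < N) dg0 v = M * dc.
Proof.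
rewrite big_mkord (eq_bigr (fun v => vdeg H0 v)); last by move=> v _; rewrite dg0E.
by rewrite -nedges_v (nedges_dc Hc0).
Qed.

Lemma P23E (v : 'I_N) : P23 dg0 v = is23 H0 v.
Proof. by rewrite /P23 /is23 dg0E. Qed.

Lemma Kb1 : L23 N dg0 - m23 N dg0 <= M - 1.
Proof.
have -> : L23 N dg0 = 2 * nvars_deg H0 2 + 3 * nvars_deg H0 3.
  rewrite /L23 big_mkord -sum23; apply: eq_big => v; first by rewrite P23E.
  by move=> _; rewrite dg0E.
have -> : m23 N dg0 = nvars_deg H0 2 + nvars_deg H0 3.
  rewrite /m23 /rk big_mkord -card23 -sum1_card; apply: eq_big => v //.
  by rewrite inE P23E.
lia.
Qed.

Definition Wd := W M N dg0.

Definition Hb : 'M['F_2]_(M, N) := \matrix_(c, v) (((val c \in Wd v) : nat)%:R)%R.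

Lemma Hb_nz c v : (Hb c v != 0%R) = (val c \in Wd v).
Proof. by rewrite /Hb mxE; case: (_ \in _) => /=; rewrite ?oner_neq0 ?eqxx. Qed.

Lemma vdeg_Hb v : vdeg Hb v = vdeg H0 v.
Proof.
rewrite /vdeg (eq_card (B := [set c : 'I_M | val c \in Wd v])); last first.
  by move=> c; rewrite !inE Hb_nz.
rewrite card_mem_seq.
- by rewrite /Wd (W_size M0 dgsum0 Kb1) dg0E.
- exact: (W_uniq M0 dgM0 dgsum0 Kb1 (ltn_ord v)).
- by move=> c; apply: (W_lt M0 dgsum0 Kb1 (ltn_ord v)).
Qed.

Lemma cdeg_Hb c : cdeg Hb c = dc.
Proof.
rewrite /cdeg card_as_sum.
rewrite (eq_bigr (fun v : 'I_N => count_mem (val c) (Wd v))); last first.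
  by move=> v _; rewrite Hb_nz count_uniq_mem // (W_uniq M0 dgM0 dgsum0 Kb1 (ltn_ord v)).
rewrite -(big_mkord xpredT (fun v => count_mem (val c) (Wd v))).
exact: (W_count M0 dgsum0 Kb1 (ltn_ord c)).
Qed.

Lemma nvars_Hb i : nvars_deg Hb i = nvars_deg H0 i.
Proof. by rewrite /nvars_deg; apply: eq_card => v; rewrite !inE vdeg_Hb. Qed.

Lemma nedges_Hb : nedges Hb = nedges H0.
Proof. by rewrite !nedges_v; apply: eq_bigr => v _; rewrite vdeg_Hb. Qed.

Lemma is23_Hb v : is23 Hb v = P23 dg0 v.
Proof. by rewrite P23E /is23 vdeg_Hb. Qed.

Lemma Hb_nocycle : no_cycle23 Hb.
Proof.
apply: (@crit M N Hb (fun v => rk dg0 v) (fun v => (rk dg0 v).-1)).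
move=> v w c; rewrite !is23_Hb !Hb_nz => Pv Pw cv cw vw csp.
apply: (acyc_nat M0 dgsum0 Kb1 Pv Pw _ cv cw csp).
by apply: contra vw => /eqP h; apply/eqP; apply: val_inj.
Qed.
End Build.

Unset Implicit Arguments.
Local Open Scope ring_scope.

Theorem theorem4 (R : realFieldType) (N M dc : nat) (lam : nat -> R) :
  (0 < N)%N -> (0 < M)%N -> (0 < dc)%N ->
  (exists H : 'M['F_2]_(M, N), has_degree_distribution H dc lam) ->
  1 - (1 / dc%:R) / (\sum_(1 <= j < M.+1) lam j / j%:R) = rate_MN R M N ->
  ((exists H : 'M['F_2]_(M, N), has_degree_distribution H dc lam /\ no_cycle23 H)
     <->
   3 * lam 2%N + 4 * lam 3%N
     <= 6 / dc%:R * (((1 - rate_MN R M N) - 1 / N%:R) / (1 - rate_MN R M N)))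
  /\
  6 / dc%:R * (((1 - rate_MN R M N) - 1 / N%:R) / (1 - rate_MN R M N)) < 6 / dc%:R.
Proof.
move=> N0 M0 d0 [H0 [Hc0 Hl0]] _; split; last exact: strict_part.
split.
- move=> [H [[Hc Hl] noc]].
  rewrite !Hl /edge_frac (nedges_dc Hc).
  by apply/(@key_iff R M N dc _ _ N0 M0 d0); apply: forward.
- rewrite !Hl0 /edge_frac (nedges_dc Hc0) => /(@key_iff R M N dc _ _ N0 M0 d0) Kb.
  exists (Hb H0); split; last exact: (Hb_nocycle M0 Hc0 Kb).
  split; first by move=> c; apply: (cdeg_Hb M0 Hc0 Kb).
  by move=> i; rewrite Hl0 /edge_frac (nvars_Hb M0 Hc0 Kb) (nedges_Hb M0 Hc0 Kb).
Qed.
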